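(* Let $n\ge1$ and $\ell\ge1$, and let $\mathcal{R}_{\ell,e}(\mathcal{C}_{n,A})$ be the set of regions of $\mathcal{C}_{n,A}$ of level $\ell$ contained in $\{x_1>x_2>\dots>x_n\}$. For $\Delta\in\mathcal{R}_{\ell,e}(\mathcal{C}_{n,A})$ and $\bm x\in\Delta$, the set $K=\{k\in[n-1]:x_k-x_{k+1}>a_1\}$ has exactly $\ell-1$ elements $i_1<\dots<i_{\ell-1}$; put $i_0=0$, $i_\ell=n$, $n_j=i_j-i_{j-1}$, and let $\Delta_j$ be the region of $\mathcal{C}_{n_j,A}$ containing $(x_{i_{j-1}+1},\dots,x_{i_j})$. Then $\varphi_\ell(\Delta)=(\Delta_1,\dots,\Delta_\ell)$ is independent of the choice of $\bm x\in\Delta$, each $\Delta_j$ lies in $\mathcal{R}_{1,e}(\mathcal{C}_{n_j,A})$, and \[\varphi_\ell:\mathcal{R}_{\ell,e}(\mathcal{C}_{n,A})\longrightarrow\bigsqcup_{\substack{n_1+\dots+n_\ell=n\\ n_1,\dots,n_\ell>0}}\mathcal{R}_{1,e}(\mathcal{C}_{n_1,A})\times\cdots\times\mathcal{R}_{1,e}(\mathcal{C}_{n_\ell,A})\] is a bijection.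
   Context: Let $A=\{a_1,\dots,a_m\}$ with $a_1>\dots>a_m>0$; for $n\ge1$, $\mathcal{C}_{n,A}$ is the arrangement in $\mathbb{R}^n$ of hyperplanes $x_i-x_j=0$ ($i<j$) and $x_i-x_j=a_k$ ($i\ne j$, $1\le k\le m$) (for $n=1$ it is empty and its unique region $\mathbb{R}$ has level 1); regions are connected components of the complement. The level of $X\subseteq\mathbb{R}^n$ is the smallest integer $\ell\ge0$ such that there are a linear subspace $W$ of dimension $\ell$ and $r>0$ with $X\subseteq\{\bm x:\min_{\bm y\in W}\|\bm x-\bm y\|\le r\}$. *)

(* Defs.v *)
From HB Require Import structures.
From mathcomp Require Import all_boot all_order all_algebra.
From mathcomp Require Import all_classical all_reals all_analysis.
Set Implicit Arguments. Unset Strict Implicit. Unset Printing Implicit Defensive.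
Import Order.TTheory GRing.Theory Num.Theory numFieldNormedType.Exports.
Local Open Scope classical_set_scope.
Local Open Scope ring_scope.

Section Defs.
Variable R : realType.
(* A = {a_0 > a_1 > ... > a_m} (0-based; the paper's a_1 is [a ord0]). *)
Variables (m : nat) (a : 'I_m.+1 -> R).

Definition arr_compl (n : nat) : set 'rV[R]_n :=
  [set x | (forall i j : 'I_n, (i < j)%N -> x 0 i - x 0 j != 0) /\
           (forall (i j : 'I_n) (k : 'I_m.+1), i != j -> x 0 i - x 0 j != a k)].

Definition is_region (n : nat) (X : set 'rV[R]_n) : Prop :=
  exists2 x, @arr_compl n x & X = connected_component (@arr_compl n) x.

Definition enorm (n : nat) (v : 'rV[R]_n) : R := Num.sqrt (\sum_i (v 0 i) ^+ 2).

(* X lies in the closed r-neighbourhood of some l-dimensional linear subspace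
   W (the row space of a rank-l matrix) for some r > 0.  The distance
   min_{y in W} |x - y| is attained, so "min <= r" is "exists y in W, |x-y| <= r". *)
Definition tube_dim (n : nat) (X : set 'rV[R]_n) (l : nat) : Prop :=
  exists W : 'M[R]_(l, n), \rank W = l /\
    exists2 r : R, 0 < r &
      forall x, X x -> exists2 y : 'rV[R]_n, (y <= W)%MS & enorm (x - y) <= r.

Definition has_level (n : nat) (X : set 'rV[R]_n) (l : nat) : Prop :=
  tube_dim X l /\ forall l', (l' < l)%N -> ~ tube_dim X l'.

Definition dom_chamber (n : nat) : set 'rV[R]_n :=
  [set x | forall i j : 'I_n, (i < j)%N -> x 0 j < x 0 i].

Definition Rle (n l : nat) (D : set 'rV[R]_n) : Prop :=
  is_region D /\ has_level D l /\ D `<=` @dom_chamber n.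

(* 0-based coordinate access, 0 outside range *)
Definition xat (n : nat) (x : 'rV[R]_n) (i : nat) : R :=
  odflt 0 (omap (fun j : 'I_n => x 0 j) (insub i)).

(* K = {k in [n-1] : x_k - x_{k+1} > a_1} (1-based k), increasingly sorted *)
Definition Kset (n : nat) (x : 'rV[R]_n) : seq nat :=
  [seq k <- iota 1 n.-1 | a ord0 < xat x k.-1 - xat x k].

(* (x_{p+1}, ..., x_q) in R^{q-p} *)
Definition block (n : nat) (x : 'rV[R]_n) (p q : nat) : 'rV[R]_(q - p)%N :=
  \row_(t < (q - p)%N) xat x (p + t)%N.

Definition region_of (k : nat) (y : 'rV[R]_k) : set 'rV[R]_k :=
  connected_component (@arr_compl k) y.

Definition regT := {k : nat & set 'rV[R]_k}.

(* phi(x) = (Delta_1, ..., Delta_l), each Delta_j tagged with its dimension n_j *)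
Definition phi (n : nat) (x : 'rV[R]_n) : seq regT :=
  pairmap (fun p q : nat => existT (fun k => set 'rV[R]_k) (q - p)%N (region_of (block x p q)))
          0%N (rcons (Kset x) n).

Fixpoint all_blocks (s : seq regT) : Prop :=
  match s with
  | [::] => True
  | b :: s' => (0 < projT1 b)%N /\ Rle 1 (projT2 b) /\ all_blocks s'
  end.

(* elements of the disjoint union over compositions n_1+...+n_l = n (n_j>0)
   of R_{1,e}(C_{n_1,A}) x ... x R_{1,e}(C_{n_l,A}) *)
Definition codom_elt (n l : nat) (s : seq regT) : Prop :=
  size s = l /\ sumn (map (fun b : regT => projT1 b) s) = n /\ all_blocks s.

End Defs.

(* Main.v *)
Require Import Defs.
From HB Require Import structures.
From mathcomp Require Import all_boot all_order all_algebra.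
From mathcomp Require Import all_classical all_reals all_analysis.
From mathcomp Require Import ring lra zify.
From Stdlib Require Import Eqdep_dec.

Set Implicit Arguments. Unset Strict Implicit. Unset Printing Implicit Defensive.
Import Order.TTheory GRing.Theory Num.Theory numFieldNormedType.Exports.
Local Open Scope classical_set_scope.
Local Open Scope ring_scope.

Lemma contc (R : realType) n (i : 'I_n) : continuous (fun p : 'rV[R]_n => p 0 i).
Proof. exact: (@coord_continuous R 1 n 0 i). Qed.
Lemma contdiff (R : realType) n (i j : 'I_n) :
  continuous (fun p : 'rV[R]_n => p 0 i - p 0 j).
Proof. move=> p. have := (continuousB (@contc _ _ i p) (@contc _ _ j p)). exact. Qed.
Lemma contseg (R : realType) n (x y : 'rV[R]_n) : continuous (fun t : R => x + t *: y).
Proof. move=> t. apply: cvgD. exact: cvg_cst. apply: continuousZr_tmp. done. Qed.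

Lemma conv_gt (R : realType) (t u v c : R) : 0 <= t <= 1 -> c < u -> c < v -> c < (1 - t) * u + t * v.
Proof.
move=> /andP[h1 h2] hu hv; case: (ltrP 0 t) => ht0.
  have h3 : 0 < t * (v - c) by apply: mulr_gt0 => //; rewrite subr_gt0.
  have h4 : 0 <= (1 - t) * (u - c).
    by apply: mulr_ge0; rewrite subr_ge0 //; exact: ltW.
  lra.
have -> : t = 0 by apply/le_anti; rewrite h1 ht0.
lra.
Qed.
Lemma conv_lt (R : realType) (t u v c : R) : 0 <= t <= 1 -> u < c -> v < c -> (1 - t) * u + t * v < c.
Proof.
move=> ht hu hv; have := @conv_gt R t (-u) (-v) (-c) ht.
rewrite !ltrN2 => /(_ hu hv); lra.
Qed.


Section S.
Variable R : realType.
Variables (m : nat) (a : 'I_m.+1 -> R).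
Hypothesis ha_pos : forall k, 0 < a k.
Hypothesis ha_dec : forall k k' : 'I_m.+1, (k < k')%N -> a k' < a k.

Lemma a_le0 k : a k <= a ord0.
Proof.
case: (posnP k) => [k0|k0]; last by apply/ltW/ha_dec.
by have -> : k = ord0 by apply/val_inj.
Qed.

Definition thr (c : R) := c = 0 \/ exists k, c = a k.
Lemma thr_ge0 c : thr c -> 0 <= c.
Proof. by case=> [->|[k ->]] //; apply/ltW. Qed.
Lemma thr_le c : thr c -> c <= a ord0.
Proof. by case=> [->|[k ->]]; [apply/ltW|apply: a_le0]. Qed.
Lemma thr_a0 : thr (a ord0). Proof. by right; exists ord0. Qed.
Lemma thr_0 : thr 0. Proof. by left. Qed.

Definition same_side n (x y : 'rV[R]_n) := forall (i j : 'I_n) c, thr c ->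
  (c < x 0 i - x 0 j <-> c < y 0 i - y 0 j).

Lemma compl_ne n (x : 'rV[R]_n) : arr_compl a x ->
  forall i j c, i != j -> thr c -> x 0 i - x 0 j != c.
Proof.
move=> [H1 H2] i j c ij [->|[k ->]]; last exact: H2.
case: (ltngtP i j) => h; first exact: H1.
- by rewrite -oppr_eq0 opprB; apply: H1.
- by move: ij; rewrite (val_inj h) eqxx.
Qed.

Lemma compl_of n (x : 'rV[R]_n) :
  (forall i j c, i != j -> thr c -> x 0 i - x 0 j != c) -> arr_compl a x.
Proof.
move=> H; split => [i j ij|i j k ij]; last by apply: H => //; right; exists k.
by apply: H; [rewrite neq_ltn ij | left].
Qed.

Lemma side_pres n (x y : 'rV[R]_n) : arr_compl a x ->
  (forall i j c, i != j -> thr c ->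
     (c < x 0 i - x 0 j -> c < y 0 i - y 0 j) /\
     (x 0 i - x 0 j < c -> y 0 i - y 0 j < c)) ->
  arr_compl a y /\ same_side x y.
Proof.
move=> hx H; split.
  apply: compl_of => i j c ij hc; have := compl_ne hx ij hc.
  rewrite neq_lt => /orP[h|h]; have [h1 h2] := H i j c ij hc.
  - by rewrite lt_eqF // h2.
  - by rewrite gt_eqF // h1.
move=> i j c hc; case: (eqVneq i j) => [->|ij]; first by rewrite !subrr.
have [h1 h2] := H i j c ij hc; split => // hy.
have := compl_ne hx ij hc; rewrite neq_lt => /orP[h|//].
by have := h2 h; rewrite ltNge (ltW hy).
Qed.

Lemma region_sub n (x y : 'rV[R]_n) : region_of a x y ->
  arr_compl a y /\ same_side x y.
Proof.
move=> hy; split; first exact: connected_component_sub hy.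
have hx : arr_compl a x by case: hy => C [Cx CA _] _; exact: CA.
have hy' : arr_compl a y by exact: connected_component_sub hy.
move=> i j c hc; case: (eqVneq i j) => [->|ij]; first by rewrite !subrr.
have hI : is_interval ((fun p : 'rV[R]_n => p 0 i - p 0 j) @` region_of a x).
  apply/connected_intervalP/connected_continuous_connected.
    exact: component_connected.
  apply: continuous_subspaceT; exact: contdiff.
have hxI : ((fun p : 'rV[R]_n => p 0 i - p 0 j) @` region_of a x) (x 0 i - x 0 j).
  by exists x => //; apply: connected_component_refl.
have hyI : ((fun p : 'rV[R]_n => p 0 i - p 0 j) @` region_of a x) (y 0 i - y 0 j).
  by exists y.
have noc : ~ ((fun p : 'rV[R]_n => p 0 i - p 0 j) @` region_of a x) c.
  move=> [z zR zc]; have := compl_ne (connected_component_sub zR) ij hc.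
  by rewrite zc eqxx.
split => h.
- rewrite ltNge; apply/negP => h'.
  have h'' : y 0 i - y 0 j < c.
    by rewrite lt_neqAle h' (compl_ne hy' ij hc).
  by apply: noc; apply: (hI _ _ hyI hxI); rewrite (ltW h) (ltW h'').
- rewrite ltNge; apply/negP => h'.
  have h'' : x 0 i - x 0 j < c.
    by rewrite lt_neqAle h' (compl_ne hx ij hc).
  by apply: noc; apply: (hI _ _ hxI hyI); rewrite (ltW h) (ltW h'').
Qed.

Lemma region_sup n (x y : 'rV[R]_n) : arr_compl a x -> arr_compl a y ->
  same_side x y -> region_of a x y.
Proof.
move=> hx hy hxy.
pose S := [set z : 'rV[R]_n | arr_compl a z /\ same_side x z].
have Sx : S x by split.
have segS : forall z, S z -> forall t : R, 0 <= t <= 1 -> S (x + t *: (z - x)).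
  move=> z [hz hxz] t ht; apply: side_pres => // i j c ij hc.
  have -> : (x + t *: (z - x)) 0 i - (x + t *: (z - x)) 0 j =
     (1 - t) * (x 0 i - x 0 j) + t * (z 0 i - z 0 j).
    by rewrite !mxE; ring.
  split => h.
    by apply: conv_gt => //; apply/(hxz i j c hc).
  apply: conv_lt => //.
  have := compl_ne hz ij hc; rewrite neq_lt => /orP[//|h'].
  by have := (hxz i j c hc).2 h'; rewrite ltNge (ltW h).
suff : S `<=` region_of a x by apply; split.
apply: connected_component_max => //; first by move=> z [].
have -> : S = \bigcup_(z in S) ((fun t : R => x + t *: (z - x)) @` `[0, 1]).
  apply/seteqP; split => [z Sz|w [z Sz [t ht <-]]].
    exists z => //; exists 1; first by rewrite /= in_itv /= ler01 lexx.
    by rewrite scale1r addrC subrK.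
  by apply: segS => //; move: ht; rewrite /= in_itv.
apply: bigcup_connected.
  exists x => z _; exists 0; first by rewrite /= in_itv /= ler01 lexx.
  by rewrite scale0r addr0.
move=> z _; apply: connected_continuous_connected; first exact: segment_connected.
apply: continuous_subspaceT; exact: contseg.
Qed.

Lemma region_char n (x y : 'rV[R]_n) : arr_compl a x ->
  region_of a x y <-> arr_compl a y /\ same_side x y.
Proof.
move=> hx; split; first exact: region_sub.
by move=> [hy hxy]; apply: region_sup.
Qed.

Lemma region_eq n (x y : 'rV[R]_n) : arr_compl a x -> arr_compl a y ->
  same_side x y -> region_of a x = region_of a y.
Proof. by move=> hx hy hxy; apply: same_connected_component; apply: region_sup. Qed.

Lemma region_self n (x : 'rV[R]_n) : arr_compl a x -> region_of a x x.
Proof. exact: connected_component_refl. Qed.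
Lemma xatO n (x : 'rV[R]_n) i (Hi : (i < n)%N) : xat x i = x 0 (Ordinal Hi).
Proof. by rewrite /xat insubT. Qed.
Lemma xat_ord n (x : 'rV[R]_n) (i : 'I_n) : xat x i = x 0 i.
Proof. by rewrite (xatO x (ltn_ord i)); congr (x 0 _); apply: val_inj. Qed.

Definition sideN N (f g : nat -> R) := forall i j c, (i < N)%N -> (j < N)%N ->
  thr c -> (c < f i - f j <-> c < g i - g j).
Definition complN N (f : nat -> R) := forall i j c, (i < N)%N -> (j < N)%N ->
  i != j -> thr c -> f i - f j != c.
Definition chamN N (f : nat -> R) := forall i j, (i < j)%N -> (j < N)%N -> f j < f i.

Lemma sideE n (x y : 'rV[R]_n) : same_side x y <-> sideN n (xat x) (xat y).
Proof.
split=> H.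
  by move=> i j c Hi Hj hc; rewrite (xatO x Hi) (xatO x Hj) (xatO y Hi) (xatO y Hj); apply: H.
by move=> i j c hc; rewrite -!xat_ord; apply: H.
Qed.
Lemma complE n (x : 'rV[R]_n) : arr_compl a x <-> complN n (xat x).
Proof.
split=> H.
  move=> i j c Hi Hj ij hc; rewrite (xatO x Hi) (xatO x Hj).
  by apply: (compl_ne H) => //.
by apply: compl_of => i j c ij hc; rewrite -!xat_ord; apply: H.
Qed.
Lemma chamE n (x : 'rV[R]_n) : dom_chamber x <-> chamN n (xat x).
Proof.
split=> H.
  by move=> i j ij Hj; have Hi := ltn_trans ij Hj; rewrite (xatO x Hi) (xatO x Hj); apply: H.
by move=> i j ij; rewrite -!xat_ord; apply: H.
Qed.

Lemma cham_le N f : chamN N f -> forall i j, (i <= j)%N -> (j < N)%N -> f j <= f i.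
Proof.
move=> H i j; rewrite leq_eqVlt => /orP[/eqP->//|ij] jN.
exact/ltW/H.
Qed.

Lemma side_presN N (f g : nat -> R) : complN N f ->
  (forall i j c, (i < N)%N -> (j < N)%N -> i != j -> thr c ->
     (c < f i - f j -> c < g i - g j) /\ (f i - f j < c -> g i - g j < c)) ->
  complN N g /\ sideN N f g.
Proof.
move=> hf H; split.
  move=> i j c Hi Hj ij hc; have := hf i j c Hi Hj ij hc.
  rewrite neq_lt => /orP[h|h]; have [h1 h2] := H i j c Hi Hj ij hc.
  - by rewrite lt_eqF // h2.
  - by rewrite gt_eqF // h1.
move=> i j c Hi Hj hc; case: (eqVneq i j) => [->|ij]; first by rewrite !subrr.
have [h1 h2] := H i j c Hi Hj ij hc; split => // hy.
have := hf i j c Hi Hj ij hc; rewrite neq_lt => /orP[h|//].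
by have := h2 h; rewrite ltNge (ltW hy).
Qed.

Lemma sideN_sym N f g : sideN N f g -> sideN N g f.
Proof. by move=> H i j c Hi Hj hc; apply: iff_sym; apply: H. Qed.

Lemma regionN n (x y : 'rV[R]_n) : arr_compl a x ->
  region_of a x y <-> complN n (xat y) /\ sideN n (xat x) (xat y).
Proof. by move=> hx; rewrite region_char // complE sideE. Qed.

Definition big n (x : 'rV[R]_n) k := a ord0 < xat x k.-1 - xat x k.
Definition bi n (x : 'rV[R]_n) i := count (big x) (iota 1 i).

Lemma KsetE n (x : 'rV[R]_n) : Kset a x = [seq k <- iota 1 n.-1 | big x k].
Proof. by []. Qed.
Lemma size_Kset n (x : 'rV[R]_n) : size (Kset a x) = bi x n.-1.
Proof. by rewrite KsetE size_filter. Qed.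

Lemma bi0 n (x : 'rV[R]_n) : bi x 0 = 0%N. Proof. by []. Qed.
Lemma biS n (x : 'rV[R]_n) i : bi x i.+1 = (bi x i + big x i.+1)%N.
Proof. by rewrite /bi -(addn1 i) iotaD count_cat /= add1n addn0 addn1. Qed.
Lemma bi_mono n (x : 'rV[R]_n) : {homo bi x : i j / (i <= j)%N}.
Proof. apply: homo_leq => [//|y z w|i]; [exact: leq_trans|by rewrite biS leq_addr]. Qed.

Lemma bi_ex n (x : 'rV[R]_n) i j : (bi x i < bi x j)%N ->
  exists k, [/\ (i < k)%N, (k <= j)%N & big x k].
Proof.
elim: j => [|j IH]; first by rewrite bi0.
rewrite biS; case hb: (big x j.+1); rewrite ?addn0 ?addn1 => h.
- exists j.+1; split => //; rewrite ltnNge; apply/negP => /(bi_mono x).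
  by rewrite biS hb; lia.
- by have [k [h1 h2 h3]] := IH h; exists k; split => //; apply: leqW.
Qed.

Lemma bi_ivt n (x : 'rV[R]_n) N j : (j <= bi x N)%N -> exists i, (i <= N)%N /\ bi x i = j.
Proof.
elim: N j => [|N IH] j.
  by rewrite bi0 leqn0 => /eqP ->; exists 0%N.
case: (leqP j (bi x N)) => h1 h2.
  by have [i [h3 h4]] := IH j h1; exists i; split => //; apply: leqW.
exists N.+1; split => //; move: h1 h2; rewrite biS.
by case: (big x N.+1); rewrite ?addn1 ?addn0 => h1 h2; lia.
Qed.

Lemma gap_big n (x : 'rV[R]_n) i j : dom_chamber x -> (i < j)%N -> (j < n)%N ->
  (bi x i < bi x j)%N -> a ord0 < xat x i - xat x j.
Proof.
move=> /chamE hc ij jn /bi_ex [k [ik kj]]; rewrite /big => hk.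
have h1 : xat x k.-1 <= xat x i by apply: (cham_le hc); lia.
have h2 : xat x j <= xat x k by apply: (cham_le hc); lia.
lra.
Qed.

Lemma gap_small n (x : 'rV[R]_n) p d : dom_chamber x -> (p + d < n)%N ->
  bi x p = bi x (p + d) -> xat x p - xat x (p + d) <= d%:R * a ord0.
Proof.
move=> hc; elim: d => [|d IH] hn hb; first by rewrite addn0 subrr mul0r.
have h1 := bi_mono x (leq_addr d p).
have h2 : (bi x (p + d) <= bi x (p + d.+1))%N by apply: bi_mono; lia.
move: hb; rewrite addnS biS => hb.
have hb1 : bi x p = bi x (p + d) by lia.
have hb2 : big x (p + d).+1 = false.
  by apply/negbTE/negP => hh; move: hb; rewrite hh; lia.
have hn' : (p + d < n)%N by lia.
have := IH hn' hb1; move: hb2; rewrite /big /= => /negbT; rewrite -leNgt.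
rewrite -natr1 mulrDl mul1r; lra.
Qed.
Lemma coord_le_enorm n (v : 'rV[R]_n) i : `|v 0 i| <= enorm v.
Proof.
rewrite /enorm -sqrtr_sqr; apply: ler_wsqrtr.
rewrite (bigD1 i) //= lerDl; apply: sumr_ge0 => j _; exact: sqr_ge0.
Qed.

Lemma recession n l' (W : 'M[R]_(l', n)) (x d : 'rV[R]_n) r :
  (forall s, 0 <= s -> exists2 y : 'rV[R]_n, (y <= W)%MS & enorm (x + s *: d - y) <= r) ->
  (d <= W)%MS.
Proof.
move=> H; rewrite submxE; apply/negPn/negP => hn.
pose K := cokermx W.
have [c hc] : exists c, (d *m K) 0 c != 0.
  case: (pselect (exists c, (d *m K) 0 c != 0)) => // hne.
  move/negP: hn; case; apply/eqP/matrixP => i j; rewrite (ord1 i) [RHS]mxE.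
  by apply/eqP; apply/negPn/negP => h; apply: hne; exists j.
pose phi (p : 'rV[R]_n) := (p *m K) 0 c.
pose Cst := \sum_i `|K i c|.
have Cst0 : 0 <= Cst by apply: sumr_ge0 => i _.
have phiB : forall p : 'rV[R]_n, `|phi p| <= Cst * enorm p.
  move=> p; rewrite /phi mxE mulr_suml; apply: le_trans (ler_norm_sum _ _ _) _.
  apply: ler_sum => i _; rewrite normrM mulrC; apply: ler_wpM2l => //.
  exact: coord_le_enorm.
have phiW : forall y, (y <= W)%MS -> phi y = 0.
  by move=> y /submxP [D ->]; rewrite /phi -mulmxA mulmx_coker mulmx0 mxE.
have phiL : forall s y, phi (x + s *: d - y) = phi x + s * phi d - phi y.
  by move=> s y; rewrite /phi mulmxBl mulmxDl -scalemxAl !mxE.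
set u := `|phi d|.
have u0 : 0 < u by rewrite normr_gt0.
pose s := (Cst * r + `|phi x| + 1) / u.
have s0 : 0 <= s.
  apply: divr_ge0; last exact: ltW.
  have : 0 <= Cst * r.
    have [y _ hy] := H 0 (lexx _).
    apply: mulr_ge0 => //; apply: le_trans hy; rewrite /enorm sqrtr_ge0 //.
  have := normr_ge0 (phi x); lra.
have [y hy hr] := H s s0.
have := phiB (x + s *: d - y); rewrite phiL (phiW _ hy) subr0 => h1.
have h2 : Cst * enorm (x + s *: d - y) <= Cst * r by apply: ler_wpM2l.
have h3 := lerB_normD (s * phi d) (phi x).
have h4 : `|s * phi d| = Cst * r + `|phi x| + 1.
  by rewrite normrM (ger0_norm s0) /s -/u divfK // gt_eqF.
rewrite [s * phi d + phi x]addrC h4 in h3.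
lra.
Qed.
Lemma has_level_uniq n (X : set 'rV[R]_n) l1 l2 :
  has_level X l1 -> has_level X l2 -> l1 = l2.
Proof.
move=> [t1 m1] [t2 m2]; apply/eqP; rewrite eqn_leq; apply/andP; split;
  rewrite leqNgt; apply/negP => h.
- exact: (m1 _ h t2).
- exact: (m2 _ h t1).
Qed.

Section Level.
Variables (n : nat) (x : 'rV[R]_n).
Hypotheses (hn : (0 < n)%N) (hx : arr_compl a x) (hc : dom_chamber x).
Let L := (bi x n.-1).+1.

Lemma reg_props y : region_of a x y ->
  [/\ arr_compl a y, dom_chamber y & forall i, (i < n)%N -> bi y i = bi x i].
Proof.
move/(region_sub) => [hy /sideE hs]; split => //.
  apply/chamE => i j ij jn; have := (hs i j 0 (ltn_trans ij jn) jn thr_0).1.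
  move/chamE: hc => /(_ i j ij jn); rewrite -subr_gt0 => h /(_ h).
  by rewrite subr_gt0.
move=> i hi; apply/eq_in_count => k; rewrite mem_iota => /andP[k1 k2].
rewrite /big; apply/idP/idP => h.
  by apply/(hs k.-1 k _ _ _ thr_a0) => //; lia.
by apply/(hs k.-1 k _ _ _ thr_a0) => //; lia.
Qed.

Lemma bi_lt i : (i < n)%N -> (bi x i < L)%N.
Proof. by move=> hi; rewrite ltnS; apply: bi_mono; lia. Qed.

Definition fstn j := find (fun i => bi x i == j) (iota 0 n).

Lemma fst_spec j : (j < L)%N ->
  [/\ (fstn j < n)%N, bi x (fstn j) = j & forall i, (i < fstn j)%N -> bi x i != j].
Proof.
move=> hj; have [i [hi hij]] := @bi_ivt n x n.-1 j (ltac:(lia)).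
have hh : has (fun i => bi x i == j) (iota 0 n).
  by apply/hasP; exists i; [rewrite mem_iota; lia | apply/eqP].
have h1 : (fstn j < n)%N by rewrite -[X in (_ < X)%N](size_iota 0 n) -has_find.
split => //.
  by have := nth_find 0 hh; rewrite nth_iota // add0n => /eqP.
move=> i' hi'; have := before_find 0 hi'; rewrite nth_iota ?add0n; last lia.
by move=> ->.
Qed.

Definition Wm : 'M[R]_(L, n) := \matrix_(j, i) ((bi x i == j)%:R).

Lemma rank_Wm : \rank Wm = L.
Proof.
pose F : 'M[R]_(n, L) := \matrix_(i, j) (((i : nat) == fstn j)%:R).
have WF : Wm *m F = 1%:M.
  apply/matrixP => j j'; rewrite !mxE.
  have [h1 h2 h3] := fst_spec (ltn_ord j').
  rewrite (bigD1 (Ordinal h1)) //= big1 => [|i hi]; last first.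
    rewrite !mxE; have -> : ((i : nat) == fstn j') = false.
      by apply/negbTE; apply: contra hi => /eqP h; apply/eqP/val_inj.
    by rewrite mulr0.
  by rewrite !mxE eqxx mulr1 addr0 h2 eq_sym.
apply/eqP; rewrite eqn_leq rank_leq_row /=.
by have := mxrankM_maxl Wm F; rewrite WF mxrank1.
Qed.

Lemma xat_row (f : 'I_n -> R) i (hi : (i < n)%N) :
  xat (\row_(k < n) f k) i = f (Ordinal hi).
Proof. by rewrite (xatO _ hi) mxE. Qed.

Lemma tube_upper : tube_dim (region_of a x) L.
Proof.
exists Wm; split; first exact: rank_Wm.
pose C := n%:R * a ord0.
have C0 : 0 <= C by apply: mulr_ge0 => //; apply/ltW.
have nC0 : 0 <= n%:R * C by apply: mulr_ge0.
exists (n%:R * C + 1); first lra.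
move=> y hy; have [hyc hyd hyb] := reg_props hy.
pose cv := \row_(j < L) xat y (fstn j).
exists (cv *m Wm); first exact: submxMl.
have entry : forall i : 'I_n, (y - cv *m Wm) 0 i = xat y i - xat y (fstn (bi x i)).
  move=> i; rewrite !mxE (bigD1 (Ordinal (bi_lt (ltn_ord i)))) //= big1 => [|j hj].
    by rewrite !mxE eqxx mulr1 addr0 xat_ord.
  rewrite !mxE; have -> : (bi x i == j) = false.
    by apply/negbTE; apply: contra hj => /eqP h; apply/eqP/val_inj.
  by rewrite mulr0.
have bound : forall i : 'I_n, `|xat y i - xat y (fstn (bi x i))| <= C.
  move=> i; have [h1 h2 h3] := fst_spec (bi_lt (ltn_ord i)).
  move: h1 h2 h3; set p := fstn (bi x i) => h1 h2 h3.
  have pi : (p <= i)%N by rewrite leqNgt; apply/negP => /h3; rewrite eqxx.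
  have iN := ltn_ord i.
  have hb : bi y p = bi y (p + (i - p)) by rewrite subnKC // !hyb // h2.
  have := @gap_small n y p (i - p) hyd (ltac:(lia)) hb; rewrite subnKC //.
  have := cham_le (proj1 (chamE y) hyd) pi (ltn_ord i).
  have : (i - p)%:R * a ord0 <= C.
    by apply: ler_wpM2r; [apply/ltW | rewrite ler_nat; lia].
  rewrite ler_norml; lra.
rewrite /enorm; apply: (@le_trans _ _ (Num.sqrt ((n%:R * C + 1) ^+ 2))); last first.
  by rewrite sqrtr_sqr ger0_norm //; lra.
apply: ler_wsqrtr; apply: (@le_trans _ _ (\sum_(i < n) C ^+ 2)).
  apply: ler_sum => i _; rewrite entry; have := bound i; rewrite ler_norml.
  set v := xat y i - _ => /andP[hl hr].
  rewrite -subr_ge0; have -> : C ^+ 2 - v ^+ 2 = (C - v) * (C + v) by ring.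
  by apply: mulr_ge0; lra.
rewrite sumr_const card_ord -[C ^+ 2 *+ n]mulr_natr.
have N1 : 1 <= n%:R :> R by rewrite ler1n.
have h1 : C ^+ 2 * n%:R <= C ^+ 2 * (n%:R * n%:R).
  by apply: ler_wpM2l; [exact: sqr_ge0 | rewrite ler_peMl //; lra].
have -> : (n%:R * C + 1) ^+ 2 = C ^+ 2 * (n%:R * n%:R) + 2 * (n%:R * C) + 1 by ring.
lra.
Qed.

Definition vv (j : nat) : 'rV[R]_n := \row_(i < n) (if (bi x i < j)%N then 1 else 0).

Lemma xat_shift (s : R) j i : (i < n)%N ->
  xat (x + s *: vv j) i = xat x i + s * (if (bi x i < j)%N then 1 else 0).
Proof. by move=> hi; rewrite !(xatO _ hi) !mxE. Qed.

Lemma shift_in (s : R) j : 0 <= s -> region_of a x (x + s *: vv j).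
Proof.
move=> s0; have hxN := proj1 (complE x) hx; have hcN := proj1 (chamE x) hc.
apply/(regionN _ hx); apply: side_presN => // i i' c Hi Hi' ii' hcc.
rewrite !xat_shift //.
have hc0 := thr_ge0 hcc; have hca := thr_le hcc.
case: (ltngtP i i') => hlt; last by rewrite hlt eqxx in ii'.
- have hm := bi_mono x (ltnW hlt).
  case h1: (bi x i < j)%N; case h2: (bi x i' < j)%N; rewrite ?mulr1 ?mulr0.
  + split; lra.
  + have := gap_big hc hlt Hi' (ltac:(lia)); split; lra.
  + lia.
  + split; lra.
- have hm := bi_mono x (ltnW hlt); have hlt' := hcN _ _ hlt Hi.
  case h1: (bi x i < j)%N; case h2: (bi x i' < j)%N; rewrite ?mulr1 ?mulr0.
  + split; lra.
  + lia.
  + split; lra.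
  + split; lra.
Qed.

Lemma tube_lower l' : (l' < L)%N -> ~ tube_dim (region_of a x) l'.
Proof.
move=> hl' [W [rW [r r0 H]]].
have vsub : forall j, (vv j <= W)%MS.
  move=> j; apply: (@recession _ _ W x (vv j) r) => s s0; apply: H.
  exact: shift_in.
have rows : forall j : 'I_L, (row j Wm <= W)%MS.
  move=> j; have -> : row j Wm = vv j.+1 - vv j.
    apply/rowP => i; rewrite !mxE ltnS.
    by case: (ltngtP (bi x i) j) => h; rewrite ?h ?eqxx ?subrr ?subr0 // ?ltn_eqF // ?gtn_eqF.
  by apply: addmx_sub; [exact: vsub | rewrite eqmx_opp; exact: vsub].
have := mxrankS (introT row_subP rows); rewrite rank_Wm rW; lia.
Qed.

Lemma level_region : has_level (region_of a x) L.
Proof. by split; [exact: tube_upper | exact: tube_lower]. Qed.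

End Level.

Lemma Rle_region n (u : 'rV[R]_n) : (0 < n)%N -> arr_compl a u -> dom_chamber u ->
  Rle a (size (Kset a u)).+1 (region_of a u).
Proof.
move=> hn hu hc; split; first by exists u.
split; first by rewrite size_Kset; exact: level_region.
by move=> y /(reg_props hn hc) [].
Qed.
Lemma xat_block n (x : 'rV[R]_n) p q t : (t < q - p)%N ->
  xat (block x p q) t = xat x (p + t).
Proof. by move=> ht; rewrite (xatO _ ht) mxE. Qed.

Lemma complN_ext M f g : (forall t, (t < M)%N -> f t = g t) -> complN M f -> complN M g.
Proof. by move=> e H i j c hi hj ij hc; rewrite -!e //; apply: H. Qed.
Lemma chamN_ext M f g : (forall t, (t < M)%N -> f t = g t) -> chamN M f -> chamN M g.
Proof. by move=> e H i j ij hj; rewrite -!e //; [apply: H | lia]. Qed.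
Lemma sideN_ext M f g f' g' : (forall t, (t < M)%N -> f t = f' t) ->
  (forall t, (t < M)%N -> g t = g' t) -> sideN M f g -> sideN M f' g'.
Proof. by move=> e e' H i j c hi hj hc; rewrite -!e // -!e' //; apply: H. Qed.

Lemma complN_shift N f p M : (p + M <= N)%N -> complN N f -> complN M (fun t => f (p + t)).
Proof. by move=> hM H i j c hi hj ij hc; apply: H => //; lia. Qed.
Lemma chamN_shift N f p M : (p + M <= N)%N -> chamN N f -> chamN M (fun t => f (p + t)).
Proof. by move=> hM H i j ij hj; apply: H; lia. Qed.
Lemma sideN_shift N f g p M : (p + M <= N)%N -> sideN N f g ->
  sideN M (fun t => f (p + t)) (fun t => g (p + t)).
Proof. by move=> hM H i j c hi hj hc; apply: H => //; lia. Qed.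

Lemma block_compl n (x : 'rV[R]_n) p q : (p <= q)%N -> (q <= n)%N -> arr_compl a x ->
  arr_compl a (block x p q).
Proof.
move=> hp hq /complE hx; apply/complE.
apply: (complN_ext (f := fun t => xat x (p + t))); first by move=> t ht; rewrite xat_block.
apply: complN_shift hx; lia.
Qed.
Lemma block_cham n (x : 'rV[R]_n) p q : (p <= q)%N -> (q <= n)%N -> dom_chamber x ->
  dom_chamber (block x p q).
Proof.
move=> hp hq /chamE hx; apply/chamE.
apply: (chamN_ext (f := fun t => xat x (p + t))); first by move=> t ht; rewrite xat_block.
apply: chamN_shift hx; lia.
Qed.
Lemma block_side n (x y : 'rV[R]_n) p q : (p <= q)%N -> (q <= n)%N -> same_side x y ->
  same_side (block x p q) (block y p q).
Proof.
move=> hp hq /sideE hx; apply/sideE.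
apply: (sideN_ext (f := fun t => xat x (p + t)) (g := fun t => xat y (p + t))).
- by move=> t ht; rewrite xat_block.
- by move=> t ht; rewrite xat_block.
apply: sideN_shift hx; lia.
Qed.

Lemma big_eq n (x y : 'rV[R]_n) k : same_side x y -> (0 < k)%N -> (k < n)%N ->
  big x k = big y k.
Proof.
move=> /sideE hs k0 kn; rewrite /big.
by apply/idP/idP => h; apply/(hs k.-1 k _ _ _ thr_a0) => //; lia.
Qed.

Lemma Kset_eq n (x y : 'rV[R]_n) : same_side x y -> Kset a x = Kset a y.
Proof.
move=> hs; rewrite !KsetE; apply: eq_in_filter => k; rewrite mem_iota => /andP[h1 h2].
apply: big_eq => //; lia.
Qed.

Lemma D_props n l (D : set 'rV[R]_n) x : Rle a l D -> D x ->
  [/\ arr_compl a x, dom_chamber x & D = region_of a x].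
Proof.
move=> [[x0 hx0 ->] [_ hd]] hx; split.
- exact: connected_component_sub hx.
- by apply: hd; rewrite /region_of.
- exact: same_connected_component.
Qed.

Lemma pairmap_eq_path (U : Type) (f g : nat -> nat -> U) (r : rel nat) c s :
  path r c s -> (forall p q, r p q -> f p q = g p q) -> pairmap f c s = pairmap g c s.
Proof.
elim: s c => [//|z s IH] c /= /andP[h1 h2] E.
by rewrite E // IH.
Qed.

Lemma path_and (e : rel nat) (P : pred nat) c s : path e c s -> all P s ->
  path (fun p q => e p q && P q) c s.
Proof. by elim: s c => [//|z s IH] c /= /andP[-> h] /andP[-> h']; rewrite IH. Qed.

Lemma map_pairmap_T1 (P : nat -> Type) (g : nat -> nat -> nat) (h : forall p q, P (g p q)) c s :
  map (fun b : {k : nat & P k} => projT1 b) (pairmap (fun p q => existT P (g p q) (h p q)) c s) = pairmap g c s.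
Proof. by elim: s c => [//|z s IH] c /=; rewrite IH. Qed.

Lemma sumn_pairmap c s : path leq c s -> (sumn (pairmap (fun p q => q - p) c s) + c)%N = last c s.
Proof.
elim: s c => [//|z s IH] c /= /andP[h1 h2].
by rewrite -(IH z h2); lia.
Qed.

Lemma nth_lt_path d c s j : path ltn c s -> (j < size s)%N -> (nth d (c :: s) j < nth d s j)%N.
Proof.
elim: s c j => [//|z s IH] c [|j] /= /andP[h1 h2] // hj.
exact: IH.
Qed.

Lemma between_path d c s j k : path ltn c s -> (j < size s)%N -> k \in s ->
  ~~ ((nth d (c :: s) j < k) && (k < nth d s j))%N.
Proof.
elim: s c j => [//|z s IH] c j /= /andP[h1 h2] hj.
have hall : all (ltn z) s by apply: (order_path_min ltn_trans).
rewrite inE => /orP[/eqP ->|ks].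
  case: j hj => [|j] hj /=; first by rewrite ltnn andbF.
  apply/negP => /andP[hh _]; move: hh; apply/negP; rewrite -leqNgt.
  case: j hj => [|j] hj //=; apply: ltnW.
  have hjs : (j < size s)%N by lia.
  by move/allP: hall; apply; apply: mem_nth.
case: j hj => [|j] hj /=.
  move/allP: hall => /(_ k ks) hk; apply/negP => /andP[_ hh].
  have hk' : (z < k)%N := hk; lia.
exact: IH.
Qed.
Lemma Kmem n (x : 'rV[R]_n) k : (k \in Kset a x) = [&& (0 < k)%N, (k < n)%N & big x k].
Proof.
rewrite KsetE mem_filter mem_iota; apply/andP/and3P.
  by move=> [h /andP[h1 h2]]; split => //; lia.
by move=> [h1 h2 h]; split => //; apply/andP; split => //; lia.
Qed.

Lemma Kpath n (x : 'rV[R]_n) : (0 < n)%N -> path ltn 0 (rcons (Kset a x) n).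
Proof.
move=> hn; rewrite rcons_path; apply/andP; split.
  rewrite path_sortedE; last exact: ltn_trans.
  apply/andP; split.
    by apply/allP => k; rewrite Kmem => /and3P[].
  by rewrite KsetE; apply: sorted_filter; [exact: ltn_trans | exact: iota_ltn_sorted].
have := mem_last 0 (Kset a x); rewrite inE => /orP[/eqP -> //|].
by rewrite Kmem => /and3P[].
Qed.

Lemma Kall n (x : 'rV[R]_n) : all (fun q => q <= n)%N (rcons (Kset a x) n).
Proof.
apply/allP => z; rewrite mem_rcons inE => /orP[/eqP -> //|].
by rewrite Kmem => /and3P[_ /ltnW].
Qed.

Lemma Kpath2 n (x : 'rV[R]_n) : (0 < n)%N ->
  path (fun p q => (p < q)%N && (q <= n)%N) 0 (rcons (Kset a x) n).
Proof. by move=> hn; apply: path_and; [exact: Kpath | exact: Kall]. Qed.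

Lemma phi_same n (x y : 'rV[R]_n) : (0 < n)%N -> arr_compl a x -> arr_compl a y ->
  same_side x y -> phi a x = phi a y.
Proof.
move=> hn hx hy hs; rewrite /phi (Kset_eq hs).
apply: pairmap_eq_path (Kpath2 y hn) _ => p q /andP[pq qn].
congr existT; apply: region_eq.
- by apply: block_compl => //; exact: ltnW.
- by apply: block_compl => //; exact: ltnW.
- by apply: block_side => //; exact: ltnW.
Qed.

Lemma all_blocks_nth (b0 : regT R) (s : seq (regT R)) :
  (forall j, (j < size s)%N -> (0 < projT1 (nth b0 s j))%N /\ Rle a 1 (projT2 (nth b0 s j))) ->
  all_blocks a s.
Proof.
elim: s => [//|b s IH] H /=.
have [h1 h2] := H 0%N (ltn0Sn _); split => //; split => //.
by apply: IH => j hj; apply: (H j.+1).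
Qed.

Lemma block_noK n (x : 'rV[R]_n) p q : (p <= q)%N -> (q <= n)%N ->
  (forall k, (p < k)%N -> (k < q)%N -> ~~ big x k) -> Kset a (block x p q) = [::].
Proof.
move=> pq qn H; rewrite KsetE; apply/eqP; rewrite -size_eq0 size_filter.
rewrite (@eq_in_count _ _ pred0) ?count_pred0 // => k; rewrite mem_iota => /andP[k1 k2].
rewrite /big !xat_block; [|lia|lia].
have := H (p + k)%N (ltac:(lia)) (ltac:(lia)); rewrite /big.
have -> : (p + k).-1 = (p + k.-1)%N by lia.
by move/negbTE.
Qed.

Lemma codom_phi n (x : 'rV[R]_n) : (0 < n)%N -> arr_compl a x -> dom_chamber x ->
  codom_elt a n (size (Kset a x)).+1 (phi a x).
Proof.
move=> hn hx hc; split; first by rewrite size_pairmap size_rcons.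
split.
  rewrite /phi (@map_pairmap_T1 (fun k => set 'rV[R]_k) (fun p q => (q - p)%N)
     (fun p q => region_of a (block x p q))).
  have := sumn_pairmap (sub_path ltnW (Kpath x hn)); rewrite addn0 last_rcons.
  exact.
have b0 : regT R by exact: (existT _ 0%N set0).
apply: (@all_blocks_nth b0) => j; rewrite size_pairmap => hj.
rewrite /phi (nth_pairmap 0%N) //=.
set p := nth 0%N (0%N :: rcons (Kset a x) n) j.
set q := nth 0%N (rcons (Kset a x) n) j.
have pq : (p < q)%N by apply: nth_lt_path => //; exact: Kpath.
have qn : (q <= n)%N by move/allP: (Kall x); apply; apply: mem_nth.
split; first by rewrite subn_gt0.
have noK : forall k, (p < k)%N -> (k < q)%N -> ~~ big x k.
  move=> k h1 h2; apply/negP => hb.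
  have kK : k \in rcons (Kset a x) n.
    rewrite mem_rcons inE Kmem hb andbT; apply/orP; right; apply/andP; split; lia.
  by have := between_path 0%N (Kpath x hn) hj kK; rewrite h1 h2.
have := @Rle_region (q - p)%N (block x p q) (ltac:(lia))
  (block_compl (ltnW pq) qn hx) (block_cham (ltnW pq) qn hc).
by rewrite (block_noK (ltnW pq) qn noK).
Qed.
Lemma pairmap_sub_inj c s1 s2 : path leq c s1 -> path leq c s2 ->
  pairmap (fun p q => (q - p)%N) c s1 = pairmap (fun p q => (q - p)%N) c s2 -> s1 = s2.
Proof.
elim: s1 c s2 => [|z1 s1 IH] c [|z2 s2] //= /andP[h1 h2] /andP[h3 h4] [e1 e2].
have ez : z1 = z2 by lia.
by subst z2; rewrite (IH z1 s2).
Qed.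

Lemma locate c s i : path ltn c s -> (c <= i)%N -> (i < last c s)%N ->
  exists2 j, (j < size s)%N & (nth 0 (c :: s) j <= i)%N && (i < nth 0 s j)%N.
Proof.
elim: s c => [|z s IH] c /=; first by lia.
move=> /andP[h1 h2] ci il; case: (ltnP i z) => iz.
  by exists 0%N => //; rewrite ci iz.
have [j hj hh] := IH z h2 iz il.
by exists j.+1.
Qed.

Lemma phi_inj n (x1 x2 : 'rV[R]_n) : (0 < n)%N -> arr_compl a x1 -> arr_compl a x2 ->
  dom_chamber x1 -> dom_chamber x2 -> phi a x1 = phi a x2 -> region_of a x1 x2.
Proof.
move=> hn hx1 hx2 hc1 hc2 E.
have Es : rcons (Kset a x1) n = rcons (Kset a x2) n.
  have := congr1 (map (fun b : regT R => projT1 b)) E; rewrite /phi.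
  rewrite (@map_pairmap_T1 (fun k => set 'rV[R]_k) (fun p q => (q - p)%N)
     (fun p q => region_of a (block x1 p q))).
  rewrite (@map_pairmap_T1 (fun k => set 'rV[R]_k) (fun p q => (q - p)%N)
     (fun p q => region_of a (block x2 p q))).
  by apply: pairmap_sub_inj; apply: (sub_path ltnW); apply: Kpath.
have EK : Kset a x1 = Kset a x2 by case: (rcons_inj Es).
have ebig : forall k, (0 < k)%N -> (k < n)%N -> big x1 k = big x2 k.
  by move=> k h1 h2; have := Kmem x1 k; rewrite EK Kmem h1 h2.
have ebi : forall i, (i < n)%N -> bi x1 i = bi x2 i.
  move=> i hi; apply: eq_in_count => k; rewrite mem_iota => /andP[k1 k2].
  apply: ebig; lia.
set s := rcons (Kset a x1) n.
have hpath := Kpath x1 hn.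
have Eb : forall j, (j < size s)%N ->
    same_side (block x1 (nth 0 (0%N :: s) j) (nth 0 s j)) (block x2 (nth 0 (0%N :: s) j) (nth 0 s j)).
  move=> j hj.
  have pq : (nth 0 (0%N :: s) j < nth 0 s j)%N by exact: nth_lt_path.
  have qn : (nth 0 s j <= n)%N by move/allP: (Kall x1); apply; apply: mem_nth.
  have b0 : regT R by exact: (existT _ 0%N set0).
  have := congr1 (fun z => nth b0 z j) E; rewrite /phi -EK -/s.
  rewrite !(nth_pairmap 0%N) // => E'.
  have E'' := inj_pair2_eq_dec _ PeanoNat.Nat.eq_dec _ _ _ _ E'.
  have : region_of a (block x1 (nth 0 (0%N :: s) j) (nth 0 s j)) (block x2 (nth 0 (0%N :: s) j) (nth 0 s j)).
    by rewrite E''; apply: region_self; apply: block_compl => //; exact: ltnW.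
  by case/region_sub.
have hc1N := proj1 (chamE x1) hc1; have hc2N := proj1 (chamE x2) hc2.
apply/(regionN _ hx1); split; first exact/complE.
move=> i j c hi hj hc; have c0 := thr_ge0 hc; have ca := thr_le hc.
case: (ltngtP i j) => hij; last by rewrite hij !subrr.
- case: (ltnP (bi x1 i) (bi x1 j)) => hb.
    have g1 := gap_big hc1 hij hj hb.
    have g2 := gap_big hc2 hij hj (ltac:(rewrite -!ebi //)).
    split => _; lra.
  have hbe : bi x1 i = bi x1 j by apply/eqP; rewrite eqn_leq hb bi_mono // ltnW.
  have [k hk /andP[pk kq]] := @locate 0%N s i hpath (leq0n _) (ltac:(by rewrite last_rcons)).
  set p := nth 0 (0%N :: s) k in pk *; set q := nth 0 s k in kq *.
  have pq : (p < q)%N by exact: nth_lt_path.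
  have qn : (q <= n)%N by move/allP: (Kall x1); apply; apply: mem_nth.
  have jq : (j < q)%N.
    rewrite ltnNge; apply/negP => qj.
    have qK : q \in Kset a x1.
      have : q \in s by apply: mem_nth.
      rewrite mem_rcons inE => /orP[/eqP qe|//]; lia.
    move: qK; rewrite Kmem => /and3P[q0 qn' bq].
    have : (bi x1 i < bi x1 q)%N.
      have -> : q = (q.-1).+1 by lia.
      rewrite biS; have -> : big x1 (q.-1).+1 by rewrite (ltn_predK q0).
      rewrite addn1 ltnS; apply: bi_mono; lia.
    have := bi_mono x1 qj; lia.
  have := Eb k hk; rewrite -/p -/q => /sideE /(_ (i - p)%N (j - p)%N c (ltac:(lia)) (ltac:(lia)) hc).
  by rewrite !xat_block; [rewrite !subnKC //; lia | lia | lia | lia | lia].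
- have h1 := hc1N _ _ hij hi; have h2 := hc2N _ _ hij hi.
  split => h; lra.
Qed.
Definition b0 : regT R := existT _ 0%N set0.
Definition ptv (b : regT R) : 'rV[R]_(projT1 b) := xget 0 (projT2 b).
Definition pt (b : regT R) : nat -> R := xat (ptv b).

Lemma pt_props b : (0 < projT1 b)%N -> Rle a 1 (projT2 b) ->
  [/\ complN (projT1 b) (pt b), chamN (projT1 b) (pt b),
   (forall k, (0 < k)%N -> (k < projT1 b)%N -> ~~ (a ord0 < pt b k.-1 - pt b k)) &
   projT2 b = region_of a (ptv b)].
Proof.
move=> hk hR.
have hin : projT2 b (ptv b).
  apply: xgetPex; case: hR => [[x0 hx0 ->] _]; exists x0; exact: region_self.
have [hc hd hD] := D_props hR hin.
have hR2 := Rle_region hk hc hd; rewrite -hD in hR2.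
have e : size (Kset a (ptv b)) = 0%N.
  by have := has_level_uniq hR.2.1 hR2.2.1; case.
split => //.
- exact/complE.
- exact/chamE.
- move=> k k0 kb; apply/negP => hb.
  have hK : Kset a (ptv b) = [::] by apply/eqP; rewrite -size_eq0 e.
  have : k \in Kset a (ptv b) by rewrite Kmem k0 kb; exact: hb.
  by rewrite hK.
Qed.

Fixpoint catf (M : R) (s : seq (regT R)) (i : nat) : R :=
  if s is b :: s' then (if (i < projT1 b)%N then pt b i else catf M s' (i - projT1 b) - M)
  else 0.

Definition Ps (s : seq (regT R)) j := sumn (take j (map (fun b : regT R => projT1 b) s)).

Lemma Ps0 s : Ps s 0 = 0%N. Proof. by case: s. Qed.
Lemma Ps_cons b s j : Ps (b :: s) j.+1 = (projT1 b + Ps s j)%N. Proof. by []. Qed.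
Lemma PsS s j : (j < size s)%N -> Ps s j.+1 = (Ps s j + projT1 (nth b0 s j))%N.
Proof.
elim: s j => [//|b s IH] [|j] hj; first by rewrite Ps_cons !Ps0 addn0.
by rewrite Ps_cons (IH j hj) Ps_cons addnA.
Qed.
Lemma Ps_size s : Ps s (size s) = sumn (map (fun b : regT R => projT1 b) s).
Proof. by rewrite /Ps take_oversize // size_map. Qed.
Lemma Ps_mono s j1 j2 : (j1 <= j2)%N -> (Ps s j1 <= Ps s j2)%N.
Proof.
elim: s j1 j2 => [|b s IH] [|j1] [|j2] //= h; rewrite ?Ps0 //.
by rewrite !Ps_cons leq_add2l; apply: IH.
Qed.

Lemma catE M s j t : (j < size s)%N -> (t < projT1 (nth b0 s j))%N ->
  catf M s (Ps s j + t) = pt (nth b0 s j) t - j%:R * M.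
Proof.
elim: s j => [//|b s IH] [|j] /= hj ht.
  by rewrite Ps0 add0n ht mul0r subr0.
rewrite Ps_cons -addnA ltnNge leq_addr /= addKn IH //.
rewrite -natr1 mulrDl mul1r; lra.
Qed.

Lemma catD s i : (i < sumn (map (fun b : regT R => projT1 b) s))%N ->
  exists j t, [/\ (j < size s)%N, (t < projT1 (nth b0 s j))%N & i = (Ps s j + t)%N].
Proof.
elim: s i => [//|b s IH] i /= hi.
case: (ltnP i (projT1 b)) => h.
  by exists 0%N, i; rewrite Ps0.
have [j [t [h1 h2 h3]]] := IH (i - projT1 b)%N (ltac:(lia)).
exists j.+1, t; split => //; rewrite Ps_cons; lia.
Qed.

Lemma Porder s j j' t t' : (j < size s)%N -> (j' < size s)%N ->
  (t < projT1 (nth b0 s j))%N -> (t' < projT1 (nth b0 s j'))%N ->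
  (Ps s j + t <= Ps s j' + t')%N -> (j <= j')%N.
Proof.
move=> hj hj' ht ht' hle; rewrite leqNgt; apply/negP => jj.
have := PsS hj'; have := @Ps_mono s j'.+1 j jj; lia.
Qed.

Lemma regT_eta (b : regT R) : b = existT _ (projT1 b) (projT2 b).
Proof. by case: b. Qed.

Lemma existT_region k1 k2 (u : 'rV[R]_k1) (D : set 'rV[R]_k2) (z : 'rV[R]_k2) :
  k1 = k2 -> D = region_of a z -> arr_compl a z -> complN k1 (xat u) ->
  sideN k1 (xat u) (xat z) ->
  existT (fun k => set 'rV[R]_k) k1 (region_of a u) = existT _ k2 D.
Proof.
move=> e; subst k2 => -> hz hu hs; congr existT; apply: region_eq.
- exact/complE.
- exact: hz.
- exact/sideE.
Qed.

Lemma pairmap_iota (T : Type) (F : nat -> nat -> T) (Q : nat -> nat) j0 L :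
  pairmap F (Q j0) (map Q (iota j0.+1 L)) = map (fun j => F (Q j) (Q j.+1)) (iota j0 L).
Proof. by elim: L j0 => [//|L IH] j0 /=; rewrite IH. Qed.

Lemma compl_from N (f : nat -> R) : chamN N f ->
  (forall i j c, (i < j)%N -> (j < N)%N -> thr c -> f i - f j != c) -> complN N f.
Proof.
move=> hc H i j c hi hj ij hcc; case: (ltngtP i j) => h.
- exact: H.
- have := hc _ _ h hi; have := thr_ge0 hcc => h1 h2.
  by apply/negP => /eqP e; lra.
- by rewrite h eqxx in ij.
Qed.
Lemma blocks_nth (s : seq (regT R)) : all_blocks a s -> forall j, (j < size s)%N ->
  (0 < projT1 (nth b0 s j))%N /\ Rle a 1 (projT2 (nth b0 s j)).
Proof.
elim: s => [//|b s IH] /= [h1 [h2 h3]] [|j] hj //=.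
exact: IH.
Qed.

Definition Bs (s : seq (regT R)) := \sum_(b <- s) \sum_(t < projT1 b) `|pt b t|.

Lemma Bs_ge0 s : 0 <= Bs s.
Proof. by apply: sumr_ge0 => b _; apply: sumr_ge0. Qed.

Lemma Bbound s j t : (j < size s)%N -> (t < projT1 (nth b0 s j))%N ->
  `|pt (nth b0 s j) t| <= Bs s.
Proof.
elim: s j => [//|b s IH] [|j] hj ht; rewrite /Bs big_cons -/(Bs s).
  have := Bs_ge0 s; rewrite (bigD1 (Ordinal ht)) //=.
  have : 0 <= \sum_(i < projT1 b | i != Ordinal ht) `|pt b i| by apply: sumr_ge0.
  lra.
have := IH j hj ht.
have : 0 <= \sum_(t < projT1 b) `|pt b t| by apply: sumr_ge0.
lra.
Qed.

Lemma complN_const N f (c0 : R) : complN N f -> complN N (fun t => f t + c0).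
Proof.
move=> H i j c hi hj ij hc; have -> : f i + c0 - (f j + c0) = f i - f j by ring.
exact: H.
Qed.
Lemma sideN_const N f (c0 : R) : sideN N (fun t => f t + c0) f.
Proof. by move=> i j c hi hj hc; have -> : f i + c0 - (f j + c0) = f i - f j by ring. Qed.

Section Surj.
Variables (n l : nat) (s : seq (regT R)).
Hypotheses (hn : (0 < n)%N) (hl : (0 < l)%N) (hsz : size s = l)
  (hsum : sumn (map (fun b : regT R => projT1 b) s) = n) (hbl : all_blocks a s).

Let M := 2 * Bs s + a ord0 + 1.
Definition xs : 'rV[R]_n := \row_(i < n) catf M s i.

Lemma xat_xs i : (i < n)%N -> xat xs i = catf M s i.
Proof. by move=> hi; rewrite (xatO _ hi) mxE. Qed.

Lemma cross j j' t t' : (j < j')%N -> (j' < size s)%N ->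
  (t < projT1 (nth b0 s j))%N -> (t' < projT1 (nth b0 s j'))%N ->
  a ord0 < catf M s (Ps s j + t) - catf M s (Ps s j' + t').
Proof.
move=> jj hj' ht ht'; have hj : (j < size s)%N by lia.
rewrite !catE //.
have b1 := Bbound hj ht; have b2 := Bbound hj' ht'.
have B0 := Bs_ge0 s.
have hjj : j%:R + 1 <= j'%:R :> R by rewrite natr1 ler_nat.
have hM : 0 < M by rewrite /M; have := ha_pos ord0; lra.
have hMM : M <= (j'%:R - j%:R) * M.
  by rewrite -[X in X <= _]mul1r; apply: ler_wpM2r; [exact: ltW | lra].
rewrite /M in hMM *.
have -> : pt (nth b0 s j) t - j%:R * (2 * Bs s + a ord0 + 1) -
   (pt (nth b0 s j') t' - j'%:R * (2 * Bs s + a ord0 + 1)) =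
  pt (nth b0 s j) t - pt (nth b0 s j') t' + (j'%:R - j%:R) * (2 * Bs s + a ord0 + 1) by ring.
move: b1 b2 hMM; rewrite !ler_norml => /andP[h1 h2] /andP[h3 h4].
move: (pt (nth b0 s j) t) (pt (nth b0 s j') t') ((j'%:R - j%:R) * (2 * Bs s + a ord0 + 1)) h1 h2 h3 h4.
move=> P1 P2 Q h1 h2 h3 h4 hMM; clear hM; lra.
Qed.

Lemma decomp i : (i < n)%N -> exists j t,
  [/\ (j < size s)%N, (t < projT1 (nth b0 s j))%N & i = (Ps s j + t)%N].
Proof. by move=> hi; apply: catD; rewrite hsum. Qed.

Lemma diff_cases i i' : (i < i')%N -> (i' < n)%N ->
  (exists j t t', [/\ (j < size s)%N, (t < t')%N, (t' < projT1 (nth b0 s j))%N,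
     i = (Ps s j + t)%N & i' = (Ps s j + t')%N]) \/
  a ord0 < catf M s i - catf M s i'.
Proof.
move=> ii hi'; have hi : (i < n)%N by lia.
have [j [t [h1 h2 ei]]] := decomp hi; have [j' [t' [h1' h2' ei']]] := decomp hi'.
have jj : (j <= j')%N by apply: (Porder h1 h1' h2 h2'); lia.
rewrite ei ei'; case: (ltngtP j j') => e; last first.
- subst j'; left; exists j, t, t'; split => //; lia.
- lia.
- by right; apply: cross.
Qed.

Lemma xs_cham : dom_chamber xs.
Proof.
apply/chamE => i i' ii hi'; have hi : (i < n)%N by lia.
rewrite !xat_xs //; case: (diff_cases ii hi') => [[j [t [t' [h1 h2 h3 -> ->]]]]|h].
  have [hp _] := blocks_nth hbl h1; have [_ hc _ _] := pt_props hp (blocks_nth hbl h1).2.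
  by rewrite !catE //; [have := hc _ _ h2 h3; lra | lia].
have := ha_pos ord0; lra.
Qed.

Lemma xs_compl : arr_compl a xs.
Proof.
apply/complE; apply: compl_from; first exact/chamE/xs_cham.
move=> i i' c ii hi' hc; have hi : (i < n)%N by lia.
rewrite !xat_xs //; case: (diff_cases ii hi') => [[j [t [t' [h1 h2 h3 -> ->]]]]|h].
  have [hp _] := blocks_nth hbl h1; have [hcp _ _ _] := pt_props hp (blocks_nth hbl h1).2.
  rewrite !catE //; last lia.
  have -> : pt (nth b0 s j) t - j%:R * M - (pt (nth b0 s j) t' - j%:R * M) =
    pt (nth b0 s j) t - pt (nth b0 s j) t' by ring.
  apply: hcp => //; lia.
have := thr_le hc; move=> hh; apply/negP => /eqP e; lra.
Qed.

Lemma Ps_lt j j' : (j < j')%N -> (j' <= size s)%N -> (Ps s j < Ps s j')%N.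
Proof.
move=> jj hj'; have := @PsS s j (ltac:(lia)); have := @Ps_mono s j.+1 j' jj.
have [hp _] := blocks_nth hbl (j := j) (ltac:(lia)); lia.
Qed.

Lemma Ps_l : Ps s l = n.
Proof. by rewrite -hsz Ps_size. Qed.

Lemma xs_K : Kset a xs = map (Ps s) (iota 1 l.-1).
Proof.
apply: (irr_sorted_eq ltn_trans ltnn).
- by rewrite KsetE; apply: sorted_filter; [exact: ltn_trans | exact: iota_ltn_sorted].
- rewrite sorted_map; apply: (@sub_in_sorted _ (fun j => (j < l)%N) ltn); last first.
    exact: iota_ltn_sorted.
  + by apply/allP => j; rewrite mem_iota; lia.
  + by move=> j j' hj hj' /= jj; apply: Ps_lt; rewrite ?hsz //; apply: ltnW.
move=> k; rewrite Kmem; apply/and3P/mapP.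
- move=> [k0 kn hb].
  have [j [t [h1 h2 e]]] := decomp kn.
  have [hp hR] := blocks_nth hbl h1; have [_ _ hnb _] := pt_props hp hR.
  case: (posnP t) => t0.
    subst t; exists j; last by rewrite e addn0.
    rewrite mem_iota; case: (posnP j) => j0; last by lia.
    by move: k0; rewrite e j0 Ps0.
  move: hb; rewrite /big !xat_xs //; last lia.
  have -> : k.-1 = (Ps s j + t.-1)%N by lia.
  rewrite e !catE //; last lia.
  have -> : pt (nth b0 s j) t.-1 - j%:R * M - (pt (nth b0 s j) t - j%:R * M) =
    pt (nth b0 s j) t.-1 - pt (nth b0 s j) t by ring.
  by move=> hb; move: (hnb t t0 h2); rewrite hb.
- move=> [j]; rewrite mem_iota => /andP[j1 j2] ->.
  have hj : (j < size s)%N by lia.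
  have k0 : (0 < Ps s j)%N by rewrite -(Ps0 s); apply: Ps_lt; lia.
  have kn : (Ps s j < n)%N by rewrite -Ps_l; apply: Ps_lt; lia.
  split => //; rewrite /big !xat_xs //; last lia.
  have [hp _] := blocks_nth hbl hj.
  have [hp' _] := blocks_nth hbl (j := j.-1) (ltac:(lia)).
  have e1 := @PsS s j.-1 (ltac:(lia)); rewrite (ltn_predK j1) in e1.
  have -> : (Ps s j).-1 = (Ps s j.-1 + (projT1 (nth b0 s j.-1)).-1)%N by lia.
  rewrite -[Ps s j]addn0; apply: cross => //; lia.
Qed.

Lemma xs_Rle : Rle a l (region_of a xs).
Proof.
have := Rle_region hn xs_compl xs_cham.
by rewrite xs_K size_map size_iota (ltn_predK hl).
Qed.

Lemma xs_phi : phi a xs = s.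
Proof.
have E : rcons (Kset a xs) n = map (Ps s) (iota 1 l).
  rewrite xs_K -Ps_l -map_rcons; congr map.
  have e : l = (l.-1 + 1)%N by lia.
  by rewrite -cats1 [in RHS]e iotaD add1n (ltn_predK hl).
rewrite /phi E.
have H := pairmap_iota (fun p q : nat =>
   existT (fun k => set 'rV[R]_k) (q - p)%N (region_of a (block xs p q))) (Ps s) 0 l.
rewrite Ps0 in H; rewrite H.
rewrite -[RHS](mkseq_nth b0 s) hsz /mkseq; apply/eq_in_map => j.
rewrite mem_iota add0n => /andP[_ hj].
have hjs : (j < size s)%N by rewrite hsz.
have [hp hR] := blocks_nth hbl hjs; have [hcp _ _ hD] := pt_props hp hR.
have ek : (Ps s j.+1 - Ps s j)%N = projT1 (nth b0 s j) by rewrite PsS // addKn.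
have hjn : (Ps s j.+1 <= n)%N by rewrite -Ps_l; apply: Ps_mono.
have ext : forall t, (t < Ps s j.+1 - Ps s j)%N ->
    xat (block xs (Ps s j) (Ps s j.+1)) t = pt (nth b0 s j) t + (- (j%:R * M)).
  move=> t ht; rewrite xat_block // xat_xs; last by move: ht; rewrite ek => ht; lia.
  by rewrite catE //; rewrite -ek.
rewrite [RHS]regT_eta; apply: (existT_region (z := ptv (nth b0 s j))) => //.
- exact/complE.
- apply: complN_ext (fun t ht => esym (ext t ht)) _.
  by apply: complN_const; rewrite ek.
- apply: sideN_ext (fun t ht => esym (ext t ht)) (fun t _ => erefl) _.
  exact: sideN_const.
Qed.

End Surj.
Lemma main n l (hn : (0 < n)%N) (hl : (0 < l)%N) :
  (forall D : set 'rV[R]_n, Rle a l D -> forall x, D x -> size (Kset a x) = l.-1) /\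
  (forall D : set 'rV[R]_n, Rle a l D -> forall x y, D x -> D y -> phi a x = phi a y) /\
  (forall D : set 'rV[R]_n, Rle a l D -> forall x, D x -> codom_elt a n l (phi a x)) /\
  (forall D1 D2 : set 'rV[R]_n, Rle a l D1 -> Rle a l D2 ->
     forall x1 x2, D1 x1 -> D2 x2 -> phi a x1 = phi a x2 -> D1 = D2) /\
  (forall s, codom_elt a n l s ->
     exists D : set 'rV[R]_n, Rle a l D /\ exists2 x, D x & phi a x = s).
Proof.
have Hlev : forall D : set 'rV[R]_n, Rle a l D -> forall x, D x -> size (Kset a x) = l.-1.
  move=> D hD x hx; have [hc hd hE] := D_props hD hx.
  have h2 := Rle_region hn hc hd; rewrite -hE in h2.
  by rewrite (has_level_uniq hD.2.1 h2.2.1).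
split => //; split.
  move=> D hD x y hx hy; have [hcx hdx hE] := D_props hD hx.
  have [hcy _ _] := D_props hD hy.
  have := hy; rewrite hE => /region_sub [_ hs].
  exact: phi_same hn hcx hcy hs.
split.
  move=> D hD x hx; have [hcx hdx hE] := D_props hD hx.
  by have := codom_phi hn hcx hdx; rewrite (Hlev D hD x hx) (ltn_predK hl).
split.
  move=> D1 D2 h1 h2 x1 x2 hx1 hx2 E.
  have [hc1 hd1 ->] := D_props h1 hx1; have [hc2 hd2 ->] := D_props h2 hx2.
  exact: same_connected_component (phi_inj hn hc1 hc2 hd1 hd2 E).
move=> s [hsz [hsum hbl]].
exists (region_of a (xs n s)); split; first exact: (xs_Rle hn hl hsz hsum hbl).
exists (xs n s); last exact: (xs_phi hn hl hsz hsum hbl).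
exact/region_self/(xs_compl hn hl hsz hsum hbl).
Qed.
End S.

Theorem lemma3p3 (R : realType) (m : nat) (a : 'I_m.+1 -> R)
    (ha_pos : forall k, 0 < a k)
    (ha_dec : forall k k' : 'I_m.+1, (k < k')%N -> a k' < a k)
    (n l : nat) (hn : (0 < n)%N) (hl : (0 < l)%N) :
  (* |K| = l - 1 *)
  (forall D : set 'rV[R]_n, Rle a l D -> forall x, D x -> size (Kset a x) = l.-1) /\
  (* phi_l(D) does not depend on the choice of x in D *)
  (forall D : set 'rV[R]_n, Rle a l D -> forall x y, D x -> D y -> phi a x = phi a y) /\
  (* phi_l(D) lies in the disjoint union (each Delta_j in R_{1,e}(C_{n_j,A})) *)
  (forall D : set 'rV[R]_n, Rle a l D -> forall x, D x -> codom_elt a n l (phi a x)) /\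
  (* phi_l is injective *)
  (forall D1 D2 : set 'rV[R]_n, Rle a l D1 -> Rle a l D2 ->
     forall x1 x2, D1 x1 -> D2 x2 -> phi a x1 = phi a x2 -> D1 = D2) /\
  (* phi_l is surjective *)
  (forall s, codom_elt a n l s ->
     exists D : set 'rV[R]_n, Rle a l D /\ exists2 x, D x & phi a x = s).
Proof. exact: (main ha_pos ha_dec hn hl). Qed.
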